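(* Let $\kappa\in\{-1,0,1\}$ and let $\mathbb{M}^3(\kappa)$ be represented as $\mathbb{R}^3$ (for $\kappa=0$), $\{x_3>0\}$ (for $\kappa=-1$) or $\mathbb{R}^3$ identified with $\mathbb{S}^3$ minus a point (for $\kappa=1$), with metric $g_\kappa=\eta_\kappa(x)(dx_1^2+dx_2^2+dx_3^2)$, where $\eta_{-1}=1/x_3^2$, $\eta_0=1$, $\eta_1=4/(1+x_1^2+x_2^2+x_3^2)^2$. Let $E$ be the end of revolution $f(s,\theta)=(\gamma_1(s)\cos\theta,\gamma_1(s)\sin\theta,\gamma_2(s))$, $s\in[0,\infty)$, $\theta\in[0,2\pi]$, where $\gamma(s)=(\gamma_1(s),0,\gamma_2(s))$ is a regular curve parametrized by arc length with respect to $g_\kappa$ and $\gamma_1>0$. Define $w_{-1}=\gamma_1/\gamma_2$, $w_0=\gamma_1$, $w_1=\frac{2\gamma_1}{1+\gamma_1^2+\gamma_2^2}$. If $\int^\infty\frac{t\,dt}{\int_0^t w_\kappa(s)\,ds}=\infty$, then $E$ is parabolic.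
   Context: $E$ carries the metric induced by the immersion $f$, which equals $ds^2+w_\kappa(s)^2d\theta^2$. An end is parabolic if every bounded harmonic function on it is determined by its boundary values. *)

(* Defs.v *)
From Stdlib Require Import Reals ZArith.
From Coquelicot Require Import Coquelicot.
Open Scope R_scope.

Definition eta (k : Z) (x1 x2 x3 : R) : R :=
  if Z.eqb k (-1) then 1 / x3 ^ 2
  else if Z.eqb k 0 then 1
  else 4 / (1 + x1 ^ 2 + x2 ^ 2 + x3 ^ 2) ^ 2.

Definition wk (k : Z) (g1 g2 : R -> R) (s : R) : R :=
  if Z.eqb k (-1) then g1 s / g2 s
  else if Z.eqb k 0 then g1 s
  else 2 * g1 s / (1 + g1 s ^ 2 + g2 s ^ 2).

Definition profile_curve (k : Z) (g1 g2 : R -> R) : Prop :=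
  (forall n x, ex_derive_n g1 n x) /\ (forall n x, ex_derive_n g2 n x) /\
  (forall s, 0 <= s -> 0 < g1 s) /\
  (Z.eqb k (-1) = true -> forall s, 0 <= s -> 0 < g2 s) /\
  (forall s, 0 <= s ->
     eta k (g1 s) 0 (g2 s) * ((Derive g1 s) ^ 2 + (Derive g2 s) ^ 2) = 1).

Definition D1 (u : R -> R -> R) : R -> R -> R :=
  fun s th => Derive (fun x => u x th) s.
Definition D2 (u : R -> R -> R) : R -> R -> R :=
  fun s th => Derive (fun y => u s y) th.

Definition jcont (u : R -> R -> R) (s th : R) : Prop :=
  continuous (fun p : R * R => u (fst p) (snd p)) (s, th).

Definition C2_at (u : R -> R -> R) (s th : R) : Prop :=
  (forall v, v = u \/ v = D1 u \/ v = D2 u ->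
     ex_derive (fun x => v x th) s /\ ex_derive (fun y => v s y) th) /\
  jcont u s th /\ jcont (D1 u) s th /\ jcont (D2 u) s th /\
  jcont (D1 (D1 u)) s th /\ jcont (D2 (D1 u)) s th /\
  jcont (D1 (D2 u)) s th /\ jcont (D2 (D2 u)) s th.

(* Laplace–Beltrami operator of the metric ds^2 + w(s)^2 dtheta^2. *)
Definition lap (w : R -> R) (u : R -> R -> R) (s th : R) : R :=
  (1 / w s) * Derive (fun x => w x * D1 u x th) s + D2 (D2 u) s th / (w s) ^ 2.

Definition bdd_harmonic_on_E (w : R -> R) (u : R -> R -> R) : Prop :=
  (forall s th, 0 <= s -> u s (th + 2 * PI) = u s th) /\
  (exists M, forall s th, 0 <= s -> Rabs (u s th) <= M) /\
  (forall s th, 0 <= s ->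
     filterlim (fun p : R * R => u (fst p) (snd p))
       (within (fun p : R * R => 0 <= fst p) (locally (s, th)))
       (locally (u s th))) /\
  (forall s th, 0 < s -> C2_at u s th /\ lap w u s th = 0).

Definition parabolic_end (w : R -> R) : Prop :=
  forall u v, bdd_harmonic_on_E w u -> bdd_harmonic_on_E w v ->
    (forall th, u 0 th = v 0 th) ->
    forall s th, 0 <= s -> u s th = v s th.

(* Main.v *)
Require Import Defs.
From Stdlib Require Import Reals ZArith Lra Lia.
From Coquelicot Require Import Coquelicot.
Open Scope R_scope.
Lemma c2d_slice2 (f : R -> R -> R) x y :
  continuity_2d_pt f x y -> continuous (fun v => f x v) y.
Proof.
  intros H. apply continuity_pt_filterlim.
  intros eps Heps. destruct (H (mkposreal eps Heps)) as [d Hd].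
  exists d. split; [apply cond_pos|].
  intros z [_ Hz]. unfold R_dist in *. simpl. apply Hd.
  - rewrite Rminus_eq_0, Rabs_R0. apply cond_pos.
  - exact Hz.
Qed.

Lemma c2d_slice1 (f : R -> R -> R) x y :
  continuity_2d_pt f x y -> continuous (fun u => f u y) x.
Proof.
  intros H. apply continuity_pt_filterlim.
  intros eps Heps. destruct (H (mkposreal eps Heps)) as [d Hd].
  exists d. split; [apply cond_pos|].
  intros z [_ Hz]. unfold R_dist in *. simpl. apply Hd.
  - exact Hz.
  - rewrite Rminus_eq_0, Rabs_R0. apply cond_pos.
Qed.
Lemma locally_pos x : 0 < x -> locally x (fun y => 0 < y).
Proof.
  intros Hx. exists (mkposreal x Hx). intros y Hy.
  apply Rabs_lt_between' in Hy. simpl in Hy. lra.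
Qed.

Lemma locally_2d_pos x y : 0 < x -> locally_2d (fun u v => 0 < u) x y.
Proof.
  intros Hx. exists (mkposreal x Hx). intros u v Hu _.
  apply Rabs_lt_between' in Hu. simpl in Hu. lra.
Qed.

Lemma dparam (f df : R->R->R) a b x : 0 < x ->
 (forall u t, 0 < u -> is_derive (fun z => f z t) u (df u t)) ->
 (forall u t, 0 < u -> continuity_2d_pt df u t) ->
 (forall u t, 0 < u -> continuity_2d_pt f u t) ->
 is_derive (fun z => RInt (fun t => f z t) a b) x (RInt (fun t => df x t) a b).
Proof.
  intros Hx Hd Hc Hf.
  replace (RInt (fun t => df x t) a b) with (RInt (fun t => Derive (fun u => f u t) x) a b).
  2:{ apply RInt_ext. intros t _. apply is_derive_unique, Hd, Hx. }
  apply (is_derive_RInt_param (fun u t => f u t)).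
  - eapply filter_imp; [|apply (locally_pos x Hx)].
    intros y Hy t _. eexists. apply Hd, Hy.
  - intros t _. eapply continuity_2d_pt_ext_loc; [|apply (Hc x t Hx)].
    destruct (locally_2d_pos x t Hx) as [d Hd'].
    exists d. intros u v Hu Hv. symmetry. apply is_derive_unique, Hd, (Hd' u v Hu Hv).
  - eapply filter_imp; [|apply (locally_pos x Hx)].
    intros y Hy. apply (@ex_RInt_continuous R_CompleteNormedModule). intros z _.
    apply c2d_slice2, Hf, Hy.
Qed.

Lemma dmul (f g : R -> R) x a b :
  is_derive f x a -> is_derive g x b -> is_derive (fun z => f z * g z) x (a * g x + f x * b).
Proof. intros Hf Hg. exact (is_derive_mult f g x a b Hf Hg Rmult_comm). Qed.

Lemma deq (f : R -> R) x a b : is_derive f x a -> a = b -> is_derive f x b.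
Proof. intros H ->. exact H. Qed.

Lemma cont_pt (f : R -> R) x : continuous f x -> continuity_pt f x.
Proof. intros H. apply continuity_pt_filterlim. exact H. Qed.

Lemma mono (f df : R -> R) x y :
  (forall z, x <= z <= y -> is_derive f z (df z)) -> (forall z, x <= z <= y -> 0 <= df z) ->
  x <= y -> f x <= f y.
Proof.
  intros Hd Hp Hxy.
  destruct (Rle_lt_or_eq_dec _ _ Hxy) as [Hlt|<-]; [|lra].
  destruct (MVT_gen f x y df) as [c [Hc Heq]].
  - intros z Hz. rewrite Rmin_left in Hz by lra. rewrite Rmax_right in Hz by lra.
    apply Hd. lra.
  - intros z Hz. rewrite Rmin_left in Hz by lra. rewrite Rmax_right in Hz by lra.
    apply cont_pt. apply (ex_derive_continuous (K:=R_AbsRing) (V:=R_NormedModule)). eexists. apply Hd. lra.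
  - rewrite Rmin_left in Hc by lra. rewrite Rmax_right in Hc by lra.
    assert (0 <= df c * (y - x)). { apply Rmult_le_pos. apply Hp. lra. lra. }
    lra.
Qed.

Lemma RInt_plus' (f g : R -> R) a b : ex_RInt f a b -> ex_RInt g a b ->
  RInt (fun t => f t + g t) a b = RInt f a b + RInt g a b.
Proof. intros Hf Hg. exact (RInt_plus f g a b Hf Hg). Qed.

Lemma RInt_minus' (f g : R -> R) a b : ex_RInt f a b -> ex_RInt g a b ->
  RInt (fun t => f t - g t) a b = RInt f a b - RInt g a b.
Proof. intros Hf Hg. exact (RInt_minus f g a b Hf Hg). Qed.

Lemma RInt_scal' (f : R -> R) a b c : ex_RInt f a b ->
  RInt (fun t => c * f t) a b = c * RInt f a b.
Proof. intros Hf. exact (RInt_scal f a b c Hf). Qed.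

Lemma exc (f : R -> R) a b : (forall t, continuous f t) -> ex_RInt f a b.
Proof. intros H. apply (@ex_RInt_continuous R_CompleteNormedModule). intros; apply H. Qed.

Lemma dplus (f g : R -> R) x a b :
  is_derive f x a -> is_derive g x b -> is_derive (fun z => f z + g z) x (a + b).
Proof. intros Hf Hg. exact (is_derive_plus f g x a b Hf Hg). Qed.

Definition EH (w dw : R -> R) (h h1 h2 h11 h22 : R -> R -> R) : Prop :=
 (forall s, 0<s -> 0 < w s /\ is_derive w s (dw s)) /\
 (forall s y, 0<s -> is_derive (fun x => h x y) s (h1 s y)) /\
 (forall s y, 0<s -> is_derive (fun x => h1 x y) s (h11 s y)) /\
 (forall s y, 0<s -> is_derive (fun t => h s t) y (h2 s y)) /\
 (forall s y, 0<s -> is_derive (fun t => h2 s t) y (h22 s y)) /\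
 (forall s y, 0<s -> continuity_2d_pt h s y /\ continuity_2d_pt h1 s y /\
     continuity_2d_pt h2 s y /\ continuity_2d_pt h11 s y /\ continuity_2d_pt h22 s y) /\
 (forall s y, 0<s -> dw s * h1 s y + w s * h11 s y + h22 s y / w s = 0) /\
 (forall s, 0<s -> h s (2*PI) = h s 0 /\ h2 s (2*PI) = h2 s 0).

Definition qf (h h1 : R -> R -> R) u t := h1 u t * h u t + h u t * h1 u t.
Definition qd (h h1 h11 : R -> R -> R) u t :=
  (h11 u t * h u t + h1 u t * h1 u t) + (h1 u t * h1 u t + h u t * h11 u t).

Lemma E_deriv w dw h h1 h2 h11 h22 s : EH w dw h h1 h2 h11 h22 -> 0 < s ->
  is_derive (fun z => RInt (fun t => h z t * h z t) 0 (2*PI)) s (RInt (fun t => qf h h1 s t) 0 (2*PI)).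
Proof.
  intros (Hw&H1&H11&H2&H22&Hc&Heq&Hper) Hs.
  apply (dparam (fun z t => h z t * h z t) (qf h h1)); [exact Hs| | |].
  - intros u t Hu. apply (dmul (fun z => h z t) (fun z => h z t)); apply H1; exact Hu.
  - intros u t Hu. destruct (Hc u t Hu) as (c0&c1&_).
    unfold qf. apply continuity_2d_pt_plus; apply continuity_2d_pt_mult; auto.
  - intros u t Hu. destruct (Hc u t Hu) as (c0&c1&_).
    apply continuity_2d_pt_mult; auto.
Qed.

Lemma Q_deriv w dw h h1 h2 h11 h22 s : EH w dw h h1 h2 h11 h22 -> 0 < s ->
  is_derive (fun z => RInt (fun t => qf h h1 z t) 0 (2*PI)) s (RInt (fun t => qd h h1 h11 s t) 0 (2*PI)).
Proof.
  intros (Hw&H1&H11&H2&H22&Hc&Heq&Hper) Hs.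
  apply (dparam (qf h h1) (qd h h1 h11)); [exact Hs| | |].
  - intros u t Hu. unfold qf, qd. apply (dplus (fun z => h1 z t * h z t) (fun z => h z t * h1 z t)).
    + apply (dmul (fun z => h1 z t) (fun z => h z t)); [apply H11|apply H1]; exact Hu.
    + apply (dmul (fun z => h z t) (fun z => h1 z t)); [apply H1|apply H11]; exact Hu.
  - intros u t Hu. destruct (Hc u t Hu) as (c0&c1&c2&c3&c4).
    unfold qd. repeat (apply continuity_2d_pt_plus || apply continuity_2d_pt_mult); auto.
  - intros u t Hu. destruct (Hc u t Hu) as (c0&c1&_).
    unfold qf. repeat (apply continuity_2d_pt_plus || apply continuity_2d_pt_mult); auto.
Qed.

Lemma cplus (f g : R -> R) x : continuous f x -> continuous g x -> continuous (fun z => f z + g z) x.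
Proof. intros; apply (continuous_plus f g); auto. Qed.
Lemma cmul (f g : R -> R) x : continuous f x -> continuous g x -> continuous (fun z => f z * g z) x.
Proof. intros; apply (continuous_mult f g); auto. Qed.
Lemma cminus (f g : R -> R) x : continuous f x -> continuous g x -> continuous (fun z => f z - g z) x.
Proof. intros; apply (continuous_minus f g); auto. Qed.
Lemma cconst (c : R) x : continuous (fun _ : R => c) x.
Proof. apply continuous_const. Qed.
Lemma cdivc (f : R -> R) c x : continuous f x -> continuous (fun z => f z / c) x.
Proof. intros; unfold Rdiv; apply (cmul f (fun _ => / c)); auto; apply cconst. Qed.

Ltac ctac := repeat match goal with
  | |- continuous (fun z => @?f z + @?g z) _ => apply (cplus f g)
  | |- continuous (fun z => @?f z - @?g z) _ => apply (cminus f g)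
  | |- continuous (fun z => @?f z * @?g z) _ => apply (cmul f g)
  | |- continuous (fun z => @?f z / ?c) _ => apply (cdivc f c)
  | |- continuous (fun _ => ?c) _ => apply cconst
  | H : continuous ?f ?x |- continuous ?f ?x => exact H
  end.

Lemma slices w dw h h1 h2 h11 h22 s : EH w dw h h1 h2 h11 h22 -> 0 < s -> forall t,
  continuous (fun t => h s t) t /\ continuous (fun t => h1 s t) t /\ continuous (fun t => h2 s t) t /\
  continuous (fun t => h11 s t) t /\ continuous (fun t => h22 s t) t.
Proof.
  intros (Hw&H1&H11&H2&H22&Hc&Heq&Hper) Hs t.
  destruct (Hc s t Hs) as (c0&c1&c2&c3&c4).
  repeat split; apply c2d_slice2; assumption.
Qed.

Lemma F_nonneg w dw h h1 h2 h11 h22 s : EH w dw h h1 h2 h11 h22 -> 0 < s ->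
  0 <= dw s * RInt (fun t => qf h h1 s t) 0 (2*PI) + w s * RInt (fun t => qd h h1 h11 s t) 0 (2*PI).
Proof.
  intros HE Hs. pose proof (slices _ _ _ _ _ _ _ s HE Hs) as Hsl.
  destruct HE as (Hw&H1&H11&H2&H22&Hc&Heq&Hper).
  destruct (Hw s Hs) as [Hws _].
  assert (Hct : forall t, continuous (fun t => h s t) t) by (intro t; apply Hsl).
  assert (Hct1 : forall t, continuous (fun t => h1 s t) t) by (intro t; apply Hsl).
  assert (Hct2 : forall t, continuous (fun t => h2 s t) t) by (intro t; apply Hsl).
  assert (Hct11 : forall t, continuous (fun t => h11 s t) t) by (intro t; apply Hsl).
  assert (Hct22 : forall t, continuous (fun t => h22 s t) t) by (intro t; apply Hsl).
  set (A := fun t => 2*(w s * (h1 s t * h1 s t)) + 2*(h2 s t * h2 s t) / w s).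
  set (B := fun t => h2 s t * h2 s t + h s t * h22 s t).
  assert (HexA : ex_RInt A 0 (2*PI)).
  { apply exc. intro t. unfold A. pose proof (Hct t); pose proof (Hct1 t); pose proof (Hct2 t). ctac. }
  assert (HexB : ex_RInt B 0 (2*PI)).
  { apply exc. intro t. unfold B. pose proof (Hct t); pose proof (Hct22 t); pose proof (Hct2 t). ctac. }
  assert (HB : RInt B 0 (2*PI) = 0).
  { apply is_RInt_unique.
    assert (Hm : minus (h s (2*PI) * h2 s (2*PI)) (h s 0 * h2 s 0) = 0).
    { destruct (Hper s Hs) as [-> ->]. unfold minus, plus, opp; simpl; ring. }
    assert (HR : is_RInt B 0 (2*PI) (minus (h s (2*PI) * h2 s (2*PI)) (h s 0 * h2 s 0))).
    { apply (is_RInt_derive (fun t => h s t * h2 s t) B).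
    - intros x _. unfold B. apply (dmul (fun t => h s t) (fun t => h2 s t)); [apply H2|apply H22]; exact Hs.
    - intros x _. unfold B. pose proof (Hct x); pose proof (Hct22 x); pose proof (Hct2 x). ctac. }
    rewrite Hm in HR. exact HR. }
  assert (Hqf : ex_RInt (fun t => qf h h1 s t) 0 (2*PI)).
  { apply exc. intro t. unfold qf. pose proof (Hct t); pose proof (Hct1 t). ctac. }
  assert (Hqd : ex_RInt (fun t => qd h h1 h11 s t) 0 (2*PI)).
  { apply exc. intro t. unfold qd. pose proof (Hct t); pose proof (Hct1 t); pose proof (Hct11 t). ctac. }
  rewrite <- (RInt_scal' _ _ _ (dw s) Hqf), <- (RInt_scal' _ _ _ (w s) Hqd).
  rewrite <- RInt_plus'.
  2,3: apply exc; intro t; unfold qf, qd; pose proof (Hct t); pose proof (Hct1 t); pose proof (Hct11 t); ctac.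
  rewrite (RInt_ext _ (fun t => A t - (2 / w s) * B t)).
  2:{ intros t _. unfold A, B, qf, qd.
      assert (E : h11 s t = - (dw s * h1 s t + h22 s t / w s) / w s).
      { pose proof (Heq s t Hs) as He.
        apply (Rmult_eq_reg_l (w s)); [|lra].
        replace (w s * h11 s t) with (- (dw s * h1 s t + h22 s t / w s)) by lra.
        field. lra. }
      rewrite E. change (@eq R (dw s * (h1 s t * h s t + h s t * h1 s t) + w s * (- (dw s * h1 s t + h22 s t / w s) / w s * h s t + h1 s t * h1 s t + (h1 s t * h1 s t + h s t * (- (dw s * h1 s t + h22 s t / w s) / w s)))) (2 * (w s * (h1 s t * h1 s t)) + 2 * (h2 s t * h2 s t) / w s - 2 / w s * (h2 s t * h2 s t + h s t * h22 s t))). field. lra. }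
  rewrite RInt_minus'; [| exact HexA | ].
  2:{ apply exc; intro t; unfold B; pose proof (Hct t); pose proof (Hct22 t); pose proof (Hct2 t); ctac. }
  rewrite RInt_scal', HB by exact HexB.
  assert (0 <= RInt A 0 (2*PI)).
  { apply RInt_ge_0; [pose proof PI_RGT_0; lra | exact HexA |].
    intros x _. unfold A. 
    assert (0 <= h1 s x * h1 s x) by apply Rle_0_sqr.
    assert (0 <= h2 s x * h2 s x) by apply Rle_0_sqr.
    assert (0 <= h2 s x * h2 s x / w s) by (apply Rdiv_le_0_compat; lra).
    assert (0 <= w s * (h1 s x * h1 s x)) by (apply Rmult_le_pos; lra).
    lra. }
  lra.
Qed.

Lemma winv_cont (w dw : R -> R) x : (forall s, 0<s -> 0 < w s /\ is_derive w s (dw s)) ->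
  0 < x -> continuous (fun z => / w z) x.
Proof.
  intros Hw Hx. destruct (Hw x Hx) as [Hp Hd].
  apply (continuous_Rinv_comp w x).
  - apply (ex_derive_continuous (K:=R_AbsRing) (V:=R_NormedModule)). eexists; exact Hd.
  - lra.
Qed.

Lemma G_ex (w dw : R -> R) a b : (forall s, 0<s -> 0 < w s /\ is_derive w s (dw s)) ->
  0 < a -> 0 < b -> ex_RInt (fun z => / w z) a b.
Proof.
  intros Hw Ha Hb. apply (@ex_RInt_continuous R_CompleteNormedModule). intros z Hz.
  apply (winv_cont w dw); auto.
  assert (0 < Rmin a b) by (apply Rmin_glb_lt; auto). lra.
Qed.

Lemma G_der (w dw : R -> R) a s : (forall s, 0<s -> 0 < w s /\ is_derive w s (dw s)) ->
  0 < a -> 0 < s -> is_derive (fun b => RInt (fun z => / w z) a b) s (/ w s).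
Proof.
  intros Hw Ha Hs. apply (is_derive_RInt (fun z => / w z) (fun b => RInt (fun z => / w z) a b) a s).
  - eapply filter_imp; [|apply (locally_pos s Hs)].
    intros y Hy. apply (@RInt_correct R_CompleteNormedModule (fun z => / w z) a y). apply (G_ex w dw); auto.
  - apply (winv_cont w dw); auto.
Qed.

Ltac Req := match goal with |- ?a = ?b => change (@eq R a b); ring end.

Lemma dminus (f g : R -> R) x a b :
  is_derive f x a -> is_derive g x b -> is_derive (fun z => f z - g z) x (a - b).
Proof. intros Hf Hg. exact (is_derive_minus f g x a b Hf Hg). Qed.

Lemma Ef_ex w dw h h1 h2 h11 h22 s : EH w dw h h1 h2 h11 h22 -> 0 < s ->
  ex_RInt (fun t => h s t * h s t) 0 (2*PI).
Proof.
  intros HE Hs. apply exc. intro t. destruct (slices _ _ _ _ _ _ _ s HE Hs t) as [Hc _].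
  ctac.
Qed.

Lemma Ef_bound w dw h h1 h2 h11 h22 M s : EH w dw h h1 h2 h11 h22 ->
  (forall s t, 0<s -> Rabs (h s t) <= M) -> 0 < s ->
  RInt (fun t => h s t * h s t) 0 (2*PI) <= 2*PI*(M*M).
Proof.
  intros HE HM Hs.
  replace (2*PI*(M*M)) with (RInt (fun _ => M*M) 0 (2*PI)).
  2:{ rewrite RInt_const. unfold scal; simpl. unfold mult; simpl. ring. }
  apply RInt_le.
  - pose proof PI_RGT_0; lra.
  - apply (Ef_ex w dw h h1 h2 h11 h22); auto.
  - apply exc. intro; apply cconst.
  - intros x _. pose proof (HM s x Hs) as H. apply Rabs_le_between in H.
    assert (0 <= M) by lra. nra.
Qed.

Lemma Ef_nonneg w dw h h1 h2 h11 h22 s : EH w dw h h1 h2 h11 h22 -> 0 < s ->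
  0 <= RInt (fun t => h s t * h s t) 0 (2*PI).
Proof.
  intros HE Hs. apply RInt_ge_0.
  - pose proof PI_RGT_0; lra.
  - apply (Ef_ex w dw h h1 h2 h11 h22); auto.
  - intros; apply Rle_0_sqr.
Qed.

Lemma Q_nonpos w dw h h1 h2 h11 h22 M : EH w dw h h1 h2 h11 h22 ->
  (forall s t, 0<s -> Rabs (h s t) <= M) ->
  (forall s1 B, 0 < s1 -> exists T, s1 <= T /\ B < RInt (fun x => / w x) s1 T) ->
  forall s, 0 < s -> RInt (fun t => qf h h1 s t) 0 (2*PI) <= 0.
Proof.
  intros HE HM Hdiv s1 Hs1.
  set (Q := fun s => RInt (fun t => qf h h1 s t) 0 (2*PI)).
  set (Ef := fun s => RInt (fun t => h s t * h s t) 0 (2*PI)).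
  change (Q s1 <= 0).
  destruct (Rle_or_lt (Q s1) 0) as [|HQ]; auto. exfalso.
  pose proof HE as HE'. destruct HE' as (Hw&_).
  set (c := w s1 * Q s1).
  assert (Hc : 0 < c). { destruct (Hw s1 Hs1). unfold c. apply Rmult_lt_0_compat; lra. }
  assert (HFm : forall s, s1 <= s -> c <= w s * Q s).
  { intros s Hs. unfold c.
    apply (mono (fun s => w s * Q s) (fun z => dw z * Q z + w z * RInt (fun t => qd h h1 h11 z t) 0 (2*PI))); auto.
    - intros z Hz. apply (dmul w Q). apply Hw; lra. apply (Q_deriv w dw h h1 h2 h11 h22); auto; lra.
    - intros z Hz. apply (F_nonneg w dw h h1 h2 h11 h22); auto; lra. }
  destruct (Hdiv s1 (2*PI*(M*M)/c) Hs1) as [T [HT HB]].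
  assert (HK : Ef s1 - c * RInt (fun x => / w x) s1 s1 <= Ef T - c * RInt (fun x => / w x) s1 T).
  { apply (mono (fun s => Ef s - c * RInt (fun x => / w x) s1 s) (fun z => Q z - c * / w z)); auto.
    - intros z Hz. apply (dminus Ef (fun s => c * RInt (fun x => / w x) s1 s)).
      + apply (E_deriv w dw h h1 h2 h11 h22); auto; lra.
      + apply (is_derive_scal (fun s => RInt (fun x => / w x) s1 s)).
        apply (G_der w dw); auto; lra.
    - intros z Hz. destruct (Hw z) as [Hwz _]; [lra|].
      assert (c * / w z <= Q z).
      { apply (Rmult_le_reg_l (w z)); auto. field_simplify; [|lra].
        specialize (HFm z (proj1 Hz)). lra. }
      lra. }
  rewrite RInt_point in HK. unfold zero in HK; simpl in HK.
  assert (0 <= Ef s1) by (apply (Ef_nonneg w dw h h1 h2 h11 h22); auto).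
  assert (Ef T <= 2*PI*(M*M)) by (apply (Ef_bound w dw h h1 h2 h11 h22 M); auto; lra).
  assert (2*PI*(M*M) < c * RInt (fun x => / w x) s1 T).
  { apply (Rmult_lt_compat_l c) in HB; auto. field_simplify in HB; lra. }
  lra.
Qed.

Lemma Ef_small w dw h h1 h2 h11 h22 : EH w dw h h1 h2 h11 h22 ->
  (forall y, 0<=y<=2*PI -> continuity_2d_pt (fun u v => h (Rmax 0 u) v) 0 y) ->
  (forall y, h 0 y = 0) ->
  forall e, 0<e -> exists d, 0<d /\ forall r, 0<r<d -> RInt (fun t => h r t * h r t) 0 (2*PI) <= 2*PI*(e*e).
Proof.
  intros HE Hb H0 e He.
  destruct (uniform_continuity_2d_1d' (fun u v => h (Rmax 0 u) v) 0 (2*PI) 0 Hb (mkposreal e He)) as [d Hd].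
  exists d. split; [apply cond_pos|]. intros r Hr.
  replace (2*PI*(e*e)) with (RInt (fun _ => e*e) 0 (2*PI)).
  2:{ rewrite RInt_const. unfold scal; simpl. unfold mult; simpl. ring. }
  apply RInt_le.
  - pose proof PI_RGT_0; lra.
  - apply (Ef_ex w dw h h1 h2 h11 h22); auto; lra.
  - apply exc. intro; apply cconst.
  - intros x Hx.
    assert (Hr' : 0 - d <= r <= 0 + d) by lra.
    assert (H00 : 0 - d <= 0 <= 0 + d) by (pose proof (cond_pos d); lra).
    assert (Hx' : 0 <= x <= 2*PI) by lra.
    specialize (Hd x 0 x r Hx' H00 Hx' Hr'). simpl in Hd.
    rewrite Rminus_eq_0, Rabs_R0 in Hd. specialize (Hd (cond_pos d)).
    rewrite (Rmax_right 0 r) in Hd by lra. rewrite Rmax_left in Hd by lra.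
    rewrite H0, Rminus_0_r in Hd. apply Rabs_lt_between in Hd. nra.
Qed.

Lemma pos_int_zero (g : R -> R) a b t : a < b -> a <= t <= b ->
  (forall x, continuous g x) -> (forall x, 0 <= g x) -> RInt g a b = 0 -> g t = 0.
Proof.
  intros Hab0 Ht Hc Hp HI.
  destruct (Rle_lt_or_eq_dec _ _ (Hp t)) as [Hgt|]; [|auto]. exfalso.
  pose proof (cont_pt g t (Hc t)) as Hct.
  destruct (Hct (g t / 2)) as [dl [Hdl Hball]]; [lra|].
  assert (Hpos : forall x, Rabs (x - t) < dl -> 0 < g x).
  { intros x Hx. destruct (Req_dec x t) as [->|Hne]; [lra|].
    specialize (Hball x). unfold R_dist in Hball. simpl in Hball.
    assert (Rabs (g x - g t) < g t / 2). { apply Hball. split; [split; [exact I| intro E; apply Hne; auto]|exact Hx]. }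
    apply Rabs_lt_between in H. lra. }
  set (a' := Rmax a (t - dl/2)). set (b' := Rmin b (t + dl/2)).
  assert (Ha' : a <= a' <= t) by (unfold a'; split; [apply Rmax_l|apply Rmax_lub; lra]).
  assert (Hb' : t <= b' <= b) by (unfold b'; split; [apply Rmin_glb; lra|apply Rmin_l]).
  assert (Hab : a' < b').
  { unfold a', b'. destruct (Rle_lt_dec a (t - dl/2)); destruct (Rle_lt_dec b (t + dl/2)).
    - rewrite Rmax_right, Rmin_left by lra. lra.
    - rewrite Rmax_right, Rmin_right by lra. lra.
    - rewrite Rmax_left, Rmin_left by lra. lra.
    - rewrite Rmax_left, Rmin_right by lra. lra. }
  assert (Hex : forall u v, ex_RInt g u v) by (intros; apply exc; auto).
  assert (E1 : RInt g a b = RInt g a a' + RInt g a' b' + RInt g b' b).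
  { rewrite <- (RInt_Chasles g a b' b) by auto. rewrite <- (RInt_Chasles g a a' b') by auto. reflexivity. }
  assert (0 <= RInt g a a') by (apply RInt_ge_0; auto; lra).
  assert (0 <= RInt g b' b) by (apply RInt_ge_0; auto; lra).
  assert (0 < RInt g a' b').
  { apply RInt_gt_0; auto. intros x Hx. apply Hpos. apply Rabs_lt_between'.
    unfold a', b' in Hx. pose proof (Rmax_r a (t - dl/2)). pose proof (Rmin_r b (t + dl/2)). lra. }
  lra.
Qed.

Lemma energy_zero w dw h h1 h2 h11 h22 M : EH w dw h h1 h2 h11 h22 ->
  (forall s t, 0<s -> Rabs (h s t) <= M) ->
  (forall s1 B, 0 < s1 -> exists T, s1 <= T /\ B < RInt (fun x => / w x) s1 T) ->
  (forall y, 0<=y<=2*PI -> continuity_2d_pt (fun u v => h (Rmax 0 u) v) 0 y) ->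
  (forall y, h 0 y = 0) ->
  forall s t, 0 < s -> 0 <= t <= 2*PI -> h s t = 0.
Proof.
  intros HE HM Hdiv Hb H0 s t Hs Ht.
  set (Ef := fun s => RInt (fun t => h s t * h s t) 0 (2*PI)).
  assert (Hdec : forall x y, 0 < x -> x <= y -> Ef y <= Ef x).
  { intros x y Hx Hxy.
    assert (- Ef x <= - Ef y); [|lra].
    apply (mono (fun z => - Ef z) (fun z => - RInt (fun t => qf h h1 z t) 0 (2*PI))); auto.
    - intros z Hz. apply (deq _ _ (-1 * RInt (fun t => qf h h1 z t) 0 (2*PI))); [|Req].
      apply (is_derive_ext (fun z => -1 * Ef z)); [intro; Req|].
      apply (is_derive_scal Ef). apply (E_deriv w dw h h1 h2 h11 h22); auto; lra.
    - intros z Hz. assert (RInt (fun t => qf h h1 z t) 0 (2*PI) <= 0); [|lra].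
      apply (Q_nonpos w dw h h1 h2 h11 h22 M); auto; lra. }
  assert (HE0 : Ef s = 0).
  { assert (0 <= Ef s) by (apply (Ef_nonneg w dw h h1 h2 h11 h22); auto).
    destruct (Rle_lt_or_eq_dec _ _ H) as [Hpos|]; [|auto]. exfalso.
    pose proof PI_RGT_0.
    set (e := Rmin 1 (Ef s / (4*PI))).
    assert (He : 0 < e) by (apply Rmin_glb_lt; [lra| apply Rdiv_lt_0_compat; lra]).
    assert (He1 : e <= 1) by apply Rmin_l.
    assert (He2 : e <= Ef s / (4*PI)) by apply Rmin_r.
    destruct (Ef_small w dw h h1 h2 h11 h22 HE Hb H0 e He) as [d [Hd Hsm]].
    set (r := Rmin s (d/2)).
    assert (Hr : 0 < r) by (unfold r; apply Rmin_glb_lt; lra).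
    assert (Hrs : r <= s) by (unfold r; apply Rmin_l).
    assert (Hrd : r < d) by (unfold r; pose proof (Rmin_r s (d/2)); lra).
    pose proof (Hdec r s Hr Hrs).
    pose proof (Hsm r (conj Hr Hrd)) as H3. change (Ef r <= 2 * PI * (e * e)) in H3.
    assert (e*e <= e) by nra.
    assert (2*PI*e <= Ef s / 2).
    { apply (Rmult_le_compat_l (2*PI)) in He2; [|lra]. field_simplify in He2; lra. }
    assert (2*PI*(e*e) <= 2*PI*e) by (apply Rmult_le_compat_l; lra). lra. }
  apply (pos_int_zero (fun t => h s t * h s t) 0 (2*PI) t) in HE0.
  - nra.
  - pose proof PI_RGT_0; lra.
  - exact Ht.
  - intro x. destruct (slices _ _ _ _ _ _ _ s HE Hs x) as [Hc _]. ctac.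
  - intro; apply Rle_0_sqr.
Qed.

Lemma RInt_Chasles' (f : R -> R) a b c : ex_RInt f a b -> ex_RInt f b c ->
  RInt f a b + RInt f b c = RInt f a c.
Proof. intros H1 H2. exact (RInt_Chasles f a b c H1 H2). Qed.


Lemma exc_on (f : R -> R) a b : (forall t, Rmin a b <= t <= Rmax a b -> continuous f t) -> ex_RInt f a b.
Proof. intros H. apply (@ex_RInt_continuous R_CompleteNormedModule). exact H. Qed.

Lemma minmax_nonneg a b t : 0 <= a -> 0 <= b -> Rmin a b <= t <= Rmax a b -> 0 <= t.
Proof. intros Ha Hb Ht. assert (0 <= Rmin a b) by (apply Rmin_glb; auto). lra. Qed.
Lemma minmax_pos a b t : 0 < a -> 0 < b -> Rmin a b <= t <= Rmax a b -> 0 < t.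
Proof. intros Ha Hb Ht. assert (0 < Rmin a b) by (apply Rmin_glb_lt; auto). lra. Qed.

Lemma winv_c (w : R -> R) t : (forall s, 0 <= s -> continuous w s) -> (forall s, 0 <= s -> 0 < w s) ->
  0 <= t -> continuous (fun x => / w x) t.
Proof. intros Wc Wp Ht. apply (continuous_Rinv_comp w t); auto. specialize (Wp t Ht). lra. Qed.

Lemma RInt_cont (f : R -> R) a t : 0 < t -> 0 <= a -> (forall s, 0 <= s -> continuous f s) ->
  continuous (fun b => RInt f a b) t.
Proof.
  intros Ht Ha Hc. apply (ex_derive_continuous (K:=R_AbsRing) (V:=R_NormedModule)).
  exists (f t). apply (is_derive_RInt f (fun b => RInt f a b) a t).
  - exists (mkposreal t Ht). intros y Hy. apply Rabs_lt_between' in Hy. simpl in Hy.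
    apply (@RInt_correct R_CompleteNormedModule f a y). apply exc_on.
    intros z Hz. apply Hc. apply (minmax_nonneg a y); auto; lra.
  - apply Hc; lra.
Qed.

Lemma exw (f : R -> R) a b : 0 <= a -> 0 <= b -> (forall s, 0 <= s -> continuous f s) -> ex_RInt f a b.
Proof. intros Ha Hb Hc. apply exc_on. intros z Hz. apply Hc. apply (minmax_nonneg a b); auto. Qed.

Lemma V_lower (w : R -> R) t : (forall s, 0 <= s -> continuous w s) -> (forall s, 0 <= s -> 0 < w s) ->
  0 < t -> 0 < RInt w 0 t /\ t / RInt w 0 t <= 4 * RInt (fun x => / w x) (t/2) t / t.
Proof.
  intros Wc Wp Ht.
  assert (Wic : forall s, 0 <= s -> continuous (fun x => / w x) s) by (intros; apply winv_c; auto).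
  set (L := t/2). set (I := RInt (fun x => / w x) L t). set (W := RInt w L t).
  assert (HL : 0 < L) by (unfold L; lra).
  assert (HI : 0 < I).
  { unfold I. apply RInt_gt_0; [unfold L; lra| |].
    - intros x Hx. assert (0 < w x) by (apply Wp; lra). apply Rinv_0_lt_compat; auto.
    - intros x Hx. apply Wic. lra. }
  assert (HW : 0 < W).
  { unfold W. apply RInt_gt_0; [unfold L; lra| |].
    - intros x Hx. apply Wp; lra.
    - intros x Hx. apply Wc. lra. }
  set (lam := I / L).
  assert (Hlam : 0 < lam) by (unfold lam; apply Rdiv_lt_0_compat; auto).
  assert (Hint : RInt (fun _ => 2) L t <= RInt (fun x => lam * w x + / lam * / w x) L t).
  { apply RInt_le; [unfold L; lra| apply exc; intro; apply cconst | |].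
    - apply exc_on. intros z Hz. assert (0 <= z) by (apply (minmax_nonneg L t); lra).
      apply cplus; apply cmul; try apply cconst; auto.
    - intros x Hx. assert (Hwx : 0 < w x) by (apply Wp; lra).
      assert (Hp : 0 < lam * w x) by (apply Rmult_lt_0_compat; auto).
      rewrite <- Rinv_mult.
      assert (2 * (lam * w x) <= (lam * w x) * (lam * w x) + 1) by (pose proof (Rle_0_sqr (lam * w x - 1)) as Hq; unfold Rsqr in Hq; nra).
      apply (Rmult_le_reg_l (lam * w x)); auto.
      rewrite Rmult_plus_distr_l, Rinv_r by lra. lra. }
  rewrite RInt_const in Hint. unfold scal in Hint; simpl in Hint; unfold mult in Hint; simpl in Hint.
  rewrite RInt_plus' in Hint.
  2:{ apply exc_on. intros z Hz. assert (0 <= z) by (apply (minmax_nonneg L t); lra). apply cmul; [apply cconst|auto]. }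
  2:{ apply exc_on. intros z Hz. assert (0 <= z) by (apply (minmax_nonneg L t); lra). apply cmul; [apply cconst|auto]. }
  rewrite !RInt_scal' in Hint.
  2:{ apply exw; auto; lra. }
  2:{ apply exw; auto; lra. }
  fold I W in Hint.
  assert (HLW : L * L <= I * W).
  { unfold lam in Hint. replace (/ (I / L) * I) with L in Hint by (field; lra).
    replace ((t - L) * 2) with (2 * L) in Hint by (unfold L; field).
    assert (L <= I / L * W) by lra.
    apply (Rmult_le_compat_l L) in H; [|lra]. replace (L * (I / L * W)) with (I * W) in H by (field; lra). lra. }
  assert (HV : RInt w 0 t = RInt w 0 L + W).
  { unfold W. symmetry. apply (RInt_Chasles w 0 L t); apply exw; auto; lra. }
  assert (HV0 : 0 <= RInt w 0 L) by (apply RInt_ge_0; [lra|apply exw; auto; lra|intros; apply Rlt_le, Wp; lra]).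
  split; [lra|].
  rewrite HV.
  apply (Rle_trans _ (t / W)).
  - apply Rmult_le_compat_l; [lra|]. apply Rinv_le_contravar; lra.
  - replace (4 * I / t) with (t * I / (L * L)) by (unfold L; field; lra).
    apply (Rmult_le_reg_r (W * (L*L))); [apply Rmult_lt_0_compat; nra|].
    field_simplify; try lra. nra.
Qed.

Lemma ex_pos (f : R -> R) a b : 0 < a -> 0 < b -> (forall s, 0 < s -> continuous f s) -> ex_RInt f a b.
Proof. intros Ha Hb Hc. apply exc_on. intros z Hz. apply Hc. apply (minmax_pos a b); auto. Qed.

Lemma cinv_pos t : 0 < t -> continuous (fun x : R => / x) t.
Proof. intros. apply continuous_Rinv. lra. Qed.

Lemma diverge (w : R -> R) : (forall s, 0 <= s -> continuous w s) -> (forall s, 0 <= s -> 0 < w s) ->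
  (exists a, 0 < a /\ is_lim (fun T => RInt (fun t => t / RInt w 0 t) a T) p_infty p_infty) ->
  forall s1 B, 0 < s1 -> exists T, s1 <= T /\ B < RInt (fun x => / w x) s1 T.
Proof.
  intros Wc Wp [a [Ha Hlim]] s1 B Hs1.
  destruct (Classical_Prop.classic (exists T, s1 <= T /\ B < RInt (fun x => / w x) s1 T)) as [|Hn]; auto.
  exfalso.
  assert (HB : forall T, s1 <= T -> RInt (fun x => / w x) s1 T <= B).
  { intros T HT. destruct (Rle_or_lt (RInt (fun x => / w x) s1 T) B); auto. exfalso; apply Hn; eauto. }
  assert (Wic : forall s, 0 <= s -> continuous (fun x => / w x) s) by (intros; apply winv_c; auto).
  set (G := fun t => RInt (fun x => / w x) s1 t).
  assert (Gc : forall t, 0 < t -> continuous G t).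
  { intros t Ht. apply RInt_cont; auto; lra. }
  assert (G0 : forall t, s1 <= t -> 0 <= G t).
  { intros t Ht. apply RInt_ge_0; auto. apply exw; auto; lra. intros x Hx. apply Rlt_le, Rinv_0_lt_compat, Wp. lra. }
  set (psi := fun t => G t * / t).
  assert (psic : forall t, 0 < t -> continuous psi t).
  { intros t Ht. apply cmul; auto. apply cinv_pos; auto. }
  set (phi := fun t => t / RInt w 0 t).
  assert (phic : forall t, 0 < t -> continuous phi t).
  { intros t Ht. unfold phi, Rdiv. apply (cmul (fun t => t) (fun t => / RInt w 0 t)).
    - apply continuous_id.
    - apply (continuous_Rinv_comp (fun t => RInt w 0 t)). apply RInt_cont; auto; lra.
      pose proof (V_lower w t Wc Wp Ht). lra. }
  set (A := Rmax a (2 * s1)).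
  assert (HA : a <= A /\ 2 * s1 <= A) by (split; [apply Rmax_l|apply Rmax_r]).
  assert (Hbound : forall T, 2 * A <= T -> RInt phi A T <= 4 * B).
  { intros T HT.
    assert (H1 : RInt phi A T <= RInt (fun t => 4 * psi t - 2 * psi (t/2)) A T).
    { apply RInt_le; [lra| apply ex_pos; auto; lra | |].
      - apply ex_pos; try lra. intros s Hs. apply cminus; apply cmul; try apply cconst.
        apply psic; auto. apply (continuous_comp (fun t => t/2) psi).
        apply cdivc, continuous_id. apply psic; lra.
      - intros t Ht. destruct (V_lower w t Wc Wp) as [_ Hv]; [lra|].
        unfold phi. eapply Rle_trans; [exact Hv|].
        assert (E : RInt (fun x => / w x) (t/2) t = G t - G (t/2)).
        { unfold G. pose proof (RInt_Chasles' (fun x => / w x) s1 (t/2) t) as HC.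
          assert (ex_RInt (fun x => / w x) s1 (t/2)) by (apply exw; auto; lra).
          assert (ex_RInt (fun x => / w x) (t/2) t) by (apply exw; auto; lra).
          specialize (HC H H0). lra. }
        rewrite E. unfold psi. right. field. lra. }
    assert (Hex : forall u v, 0 < u -> 0 < v -> ex_RInt psi u v) by (intros; apply ex_pos; auto).
    assert (Hcomp : RInt (fun t => psi (t/2)) A T = 2 * RInt psi (A/2) (T/2)).
    { pose proof (RInt_comp_lin psi (1/2) 0 A T) as Hc.
      replace (1/2*A+0) with (A/2) in Hc by field. replace (1/2*T+0) with (T/2) in Hc by field.
      rewrite <- Hc by (apply Hex; lra).
      rewrite <- RInt_scal'.
      - apply RInt_ext. intros x _. unfold scal; simpl; unfold mult; simpl.
        replace (1/2*x+0) with (x/2) by field. field.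
      - apply (ex_RInt_ext (fun y => scal (1/2) (psi (1/2*y+0)))).
        + intros x _. unfold scal; simpl; unfold mult; simpl. replace (1/2*x+0) with (x/2) by field. reflexivity.
        + apply (@ex_RInt_comp_lin R_NormedModule psi (1/2) 0 A T). replace (1/2*A+0) with (A/2) by field. replace (1/2*T+0) with (T/2) by field.
          apply Hex; lra. }
    assert (Hsplit : RInt (fun t => 4 * psi t - 2 * psi (t/2)) A T = 4 * RInt psi A T - 2 * RInt (fun t => psi (t/2)) A T).
    { rewrite <- !RInt_scal'.
      - apply (RInt_minus (fun t => 4 * psi t) (fun t => 2 * psi (t/2))).
        + apply ex_pos; try lra. intros; apply cmul; [apply cconst|apply psic; auto].
        + apply ex_pos; try lra. intros; apply cmul; [apply cconst|].
          apply (continuous_comp (fun t => t/2) psi). apply cdivc, continuous_id. apply psic; lra.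
      - apply ex_pos; try lra. intros; apply (continuous_comp (fun t => t/2) psi). apply cdivc, continuous_id. apply psic; lra.
      - apply Hex; lra. }
    rewrite Hsplit, Hcomp in H1.
    assert (C1 : RInt psi A T = RInt psi A (T/2) + RInt psi (T/2) T).
    { symmetry. apply (RInt_Chasles psi A (T/2) T); apply Hex; lra. }
    assert (C2 : RInt psi (A/2) (T/2) = RInt psi (A/2) A + RInt psi A (T/2)).
    { symmetry. apply (RInt_Chasles psi (A/2) A (T/2)); apply Hex; lra. }
    assert (P1 : 0 <= RInt psi (A/2) A).
    { apply RInt_ge_0; [lra|apply Hex; lra|]. intros x Hx. unfold psi. apply Rmult_le_pos.
      apply G0; lra. apply Rlt_le, Rinv_0_lt_compat; lra. }
    assert (P2 : RInt psi (T/2) T <= B).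
    { apply (Rle_trans _ (RInt (fun _ => B * / (T/2)) (T/2) T)).
      - apply RInt_le; [lra|apply Hex; lra|apply exc; intro; apply cconst|].
        intros x Hx. unfold psi.
        assert (0 <= G x) by (apply G0; lra).
        assert (G x <= B) by (apply HB; lra).
        apply (Rle_trans _ (B * / x)).
        + apply Rmult_le_compat_r; [apply Rlt_le, Rinv_0_lt_compat; lra| lra].
        + apply Rmult_le_compat_l; [lra|]. apply Rinv_le_contravar; lra.
      - rewrite RInt_const. unfold scal; simpl; unfold mult; simpl. right. field. lra. }
    lra. }
  set (C := RInt phi a A).
  destruct (Hlim (fun y => C + 4 * B < y)) as [N HN].
  { exists (C + 4*B). auto. }
  set (T := Rmax (N + 1) (2 * A)).
  assert (HT : N < T /\ 2 * A <= T) by (split; [pose proof (Rmax_l (N+1) (2*A)); unfold T; lra|apply Rmax_r]).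
  specialize (HN T (proj1 HT)). simpl in HN.
  change (C + 4 * B < RInt phi a T) in HN.
  rewrite <- (RInt_Chasles phi a A T) in HN by (apply ex_pos; auto; lra).
  specialize (Hbound T (proj2 HT)).
  change (C + 4 * B < C + RInt phi A T) in HN. lra.
Qed.


Lemma wfacts k g1 g2 : (k = (-1)%Z \/ k = 0%Z \/ k = 1%Z) -> profile_curve k g1 g2 ->
 (forall s, 0 <= s -> ex_derive (wk k g1 g2) s) /\ (forall s, 0 <= s -> 0 < wk k g1 g2 s).
Proof.
  intros hk (Hg1 & Hg2 & Hp1 & Hp2 & _).
  assert (d1 : forall x, ex_derive g1 x) by (intro x; exact (Hg1 1%nat x)).
  assert (d2 : forall x, ex_derive g2 x) by (intro x; exact (Hg2 1%nat x)).
  destruct hk as [->|[->| ->]].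
  - specialize (Hp2 eq_refl). split; intros s Hs.
    + apply (ex_derive_ext (fun s => g1 s / g2 s)); [intro; reflexivity|].
      auto_derive. repeat split; auto. specialize (Hp2 s Hs). lra.
    + change (0 < g1 s / g2 s). apply Rdiv_lt_0_compat; auto.
  - split; intros s Hs.
    + apply (ex_derive_ext g1); [intro; reflexivity|auto].
    + change (0 < g1 s). auto.
  - split; intros s Hs.
    + apply (ex_derive_ext (fun s => 2 * g1 s / (1 + g1 s ^ 2 + g2 s ^ 2))); [intro; reflexivity|].
      auto_derive. repeat split; auto. nra.
    + change (0 < 2 * g1 s / (1 + g1 s ^ 2 + g2 s ^ 2)). apply Rdiv_lt_0_compat; [specialize (Hp1 s Hs); lra|nra].
Qed.


Lemma per_deriv (u : R->R->R) s : (forall th, u s (th + 2*PI) = u s th) ->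
  ex_derive (fun y => u s y) 0 -> ex_derive (fun y => u s y) (2*PI) -> D2 u s (2*PI) = D2 u s 0.
Proof.
  intros Hp [d0 H0] [d1 H1]. unfold D2.
  transitivity d1; [apply is_derive_unique; exact H1|].
  transitivity d0; [|symmetry; apply is_derive_unique; exact H0].
  assert (H1' : is_derive (fun y => u s y) (0 + 2*PI) d1) by (rewrite Rplus_0_l; exact H1).
  assert (Hg : is_derive (fun y : R => y + 2*PI) 0 1) by (auto_derive; auto; ring).
  pose proof (is_derive_comp (fun y => u s y) (fun y => y + 2*PI) 0 d1 1 H1' Hg) as Hc.
  apply (is_derive_ext _ (fun y => u s y)) in Hc; [|intro; apply Hp].
  pose proof (is_derive_unique _ _ _ Hc) as E1. pose proof (is_derive_unique _ _ _ H0) as E2.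
  rewrite E2 in E1. rewrite E1. symmetry. apply (scal_one (K:=R_AbsRing)).
Qed.

Lemma bnd_cont (u : R->R->R) y :
  filterlim (fun p : R*R => u (fst p) (snd p)) (within (fun p : R*R => 0 <= fst p) (locally (0, y))) (locally (u 0 y)) ->
  continuity_2d_pt (fun a b => u (Rmax 0 a) b) 0 y.
Proof.
  intros H eps.
  destruct (H (fun z => Rabs (z - u 0 y) < eps)) as [d Hd].
  { exists eps. intros z Hz. exact Hz. }
  exists d. intros a b Ha Hb.
  rewrite (Rmax_left 0 0) by lra.
  apply (Hd (Rmax 0 a, b)).
  - split; simpl.
    + unfold ball; simpl; unfold AbsRing_ball, abs, minus, plus, opp; simpl.
      rewrite Rminus_0_r in Ha. apply Rabs_lt_between in Ha.
      rewrite Ropp_0, Rplus_0_r. apply Rabs_lt_between.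
      destruct (Rle_dec 0 a); [rewrite Rmax_right by lra|rewrite Rmax_left by lra]; split; try lra; pose proof (cond_pos d); lra.
    + exact Hb.
  - simpl. apply Rmax_l.
Qed.

Lemma lap_eq (w : R -> R) dw u s th : is_derive w s dw -> 0 < w s -> C2_at u s th -> lap w u s th = 0 ->
  dw * D1 u s th + w s * D1 (D1 u) s th + D2 (D2 u) s th / w s = 0.
Proof.
  intros Hw Hpos [Hd _] Hl.
  destruct (Hd (D1 u) (or_intror (or_introl eq_refl))) as [[l Hl1] _].
  assert (Hdd : D1 (D1 u) s th = l) by (apply is_derive_unique; exact Hl1).
  assert (HP : Derive (fun x => w x * D1 u x th) s = dw * D1 u s th + w s * D1 (D1 u) s th).
  { apply is_derive_unique. rewrite Hdd. apply (dmul w (fun x => D1 u x th)); auto. }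
  unfold lap in Hl. rewrite HP in Hl.
  apply (Rmult_eq_reg_l (/ w s)); [|apply Rinv_neq_0_compat; lra].
  rewrite Rmult_0_r. rewrite <- Hl. field. lra.
Qed.

Lemma per_nat (f : R -> R) : (forall t, f (t + 2*PI) = f t) -> forall n x, f (x + 2*PI*INR n) = f x.
Proof.
  intros Hp n. induction n as [|n IH]; intro x.
  - simpl. f_equal. ring.
  - rewrite S_INR. replace (x + 2*PI*(INR n + 1)) with ((x + 2*PI*INR n) + 2*PI) by ring.
    rewrite Hp. apply IH.
Qed.

Lemma per_reduce (f : R -> R) : (forall t, f (t + 2*PI) = f t) -> (forall t, 0 <= t <= 2*PI -> f t = 0) ->
  forall t, f t = 0.
Proof.
  intros Hp H0 t. pose proof PI_RGT_0.
  destruct (archimed (t / (2*PI))) as [Ha1 Ha2].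
  set (m := (up (t / (2*PI)) - 1)%Z).
  assert (Hm : IZR m <= t / (2*PI) < IZR m + 1).
  { unfold m. rewrite minus_IZR. lra. }
  assert (Ht' : 0 <= t - 2*PI*IZR m <= 2*PI).
  { destruct Hm as [Hm1 Hm2].
    apply (Rmult_le_compat_l (2*PI)) in Hm1; [|lra].
    apply (Rmult_lt_compat_l (2*PI)) in Hm2; [|lra].
    replace (2*PI*(t/(2*PI))) with t in Hm1, Hm2 by (field; lra). lra. }
  destruct (Z_le_gt_dec 0 m) as [Hz|Hz].
  - rewrite <- (Z2Nat.id m Hz) in Ht'. rewrite <- INR_IZR_INZ in Ht'.
    replace t with ((t - 2*PI*INR (Z.to_nat m)) + 2*PI*INR (Z.to_nat m)) at 1 by ring.
    rewrite (per_nat f Hp). apply H0; exact Ht'.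
  - assert (Hz' : (0 <= - m)%Z) by lia.
    assert (E : IZR m = - INR (Z.to_nat (- m))).
    { rewrite INR_IZR_INZ, Z2Nat.id by exact Hz'. rewrite opp_IZR. ring. }
    rewrite E in Ht'.
    replace (t - 2 * PI * - INR (Z.to_nat (- m))) with (t + 2*PI*INR (Z.to_nat (-m))) in Ht' by ring.
    apply H0 in Ht'. rewrite (per_nat f Hp) in Ht'. exact Ht'.
Qed.

Lemma C2_facts u s th : C2_at u s th ->
  is_derive (fun x => u x th) s (D1 u s th) /\ is_derive (fun x => D1 u x th) s (D1 (D1 u) s th) /\
  is_derive (fun t => u s t) th (D2 u s th) /\ is_derive (fun t => D2 u s t) th (D2 (D2 u) s th) /\
  continuity_2d_pt u s th /\ continuity_2d_pt (D1 u) s th /\ continuity_2d_pt (D2 u) s th /\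
  continuity_2d_pt (D1 (D1 u)) s th /\ continuity_2d_pt (D2 (D2 u)) s th.
Proof.
  intros [Hd (c0&c1&c2&c3&_&_&c6)].
  destruct (Hd u (or_introl eq_refl)) as [a1 a2].
  destruct (Hd (D1 u) (or_intror (or_introl eq_refl))) as [b1 _].
  destruct (Hd (D2 u) (or_intror (or_intror eq_refl))) as [_ d2].
  refine (conj _ (conj _ (conj _ (conj _ (conj _ (conj _ (conj _ (conj _ _)))))))).
  - exact (Derive_correct (fun x => u x th) s a1).
  - exact (Derive_correct (fun x => D1 u x th) s b1).
  - exact (Derive_correct (fun y => u s y) th a2).
  - exact (Derive_correct (fun y => D2 u s y) th d2).
  - apply continuity_2d_pt_filterlim; exact c0.
  - apply continuity_2d_pt_filterlim; exact c1.
  - apply continuity_2d_pt_filterlim; exact c2.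
  - apply continuity_2d_pt_filterlim; exact c3.
  - apply continuity_2d_pt_filterlim; exact c6.
Qed.

Theorem corollary2p17 (k : Z) (g1 g2 : R -> R)
  (hk : k = (-1)%Z \/ k = 0%Z \/ k = 1%Z)
  (hg : profile_curve k g1 g2)
  (hint : exists a, 0 < a /\
     is_lim (fun T => RInt (fun t => t / RInt (wk k g1 g2) 0 t) a T)
            p_infty p_infty) :
  parabolic_end (wk k g1 g2).
Proof.
  destruct (wfacts k g1 g2 hk hg) as [Wd Wp].
  assert (Wc : forall s, 0 <= s -> continuous (wk k g1 g2) s).
  { intros s Hs. apply (ex_derive_continuous (K:=R_AbsRing) (V:=R_NormedModule)). auto. }
  pose proof (diverge (wk k g1 g2) Wc Wp hint) as Hdiv.
  intros u v [Pu [[Mu HMu] [Cu Hu]]] [Pv [[Mv HMv] [Cv Hv]]] H0 s th Hs.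
  destruct (Rle_lt_or_eq_dec _ _ Hs) as [Hs'|<-]; [|apply H0].
  set (w := wk k g1 g2) in *.
  set (h := fun a b => u a b - v a b).
  assert (HEH : EH w (Derive w) h (fun a b => D1 u a b - D1 v a b) (fun a b => D2 u a b - D2 v a b)
     (fun a b => D1 (D1 u) a b - D1 (D1 v) a b) (fun a b => D2 (D2 u) a b - D2 (D2 v) a b)).
  { split; [|split;[|split;[|split;[|split;[|split;[|split]]]]]].
    - intros s0 H. split; [apply Wp; lra|]. apply Derive_correct, Wd; lra.
    - intros s0 y H.
      destruct (C2_facts u s0 y (proj1 (Hu s0 y H))) as (a1&_).
      destruct (C2_facts v s0 y (proj1 (Hv s0 y H))) as (b1&_).
      apply (dminus (fun x => u x y) (fun x => v x y)); auto.
    - intros s0 y H.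
      destruct (C2_facts u s0 y (proj1 (Hu s0 y H))) as (_&a1&_).
      destruct (C2_facts v s0 y (proj1 (Hv s0 y H))) as (_&b1&_).
      apply (dminus (fun x => D1 u x y) (fun x => D1 v x y)); auto.
    - intros s0 y H.
      destruct (C2_facts u s0 y (proj1 (Hu s0 y H))) as (_&_&a1&_).
      destruct (C2_facts v s0 y (proj1 (Hv s0 y H))) as (_&_&b1&_).
      apply (dminus (fun t => u s0 t) (fun t => v s0 t)); auto.
    - intros s0 y H.
      destruct (C2_facts u s0 y (proj1 (Hu s0 y H))) as (_&_&_&a1&_).
      destruct (C2_facts v s0 y (proj1 (Hv s0 y H))) as (_&_&_&b1&_).
      apply (dminus (fun t => D2 u s0 t) (fun t => D2 v s0 t)); auto.
    - intros s0 y H.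
      destruct (C2_facts u s0 y (proj1 (Hu s0 y H))) as (_&_&_&_&a0&a1&a2&a3&a4).
      destruct (C2_facts v s0 y (proj1 (Hv s0 y H))) as (_&_&_&_&b0&b1&b2&b3&b4).
      repeat split; apply continuity_2d_pt_minus; auto.
    - intros s0 y H.
      assert (Hw0 : is_derive w s0 (Derive w s0)) by (apply Derive_correct, Wd; lra).
      assert (Hwp : 0 < w s0) by (apply Wp; lra).
      pose proof (lap_eq w (Derive w s0) u s0 y Hw0 Hwp (proj1 (Hu s0 y H)) (proj2 (Hu s0 y H))).
      pose proof (lap_eq w (Derive w s0) v s0 y Hw0 Hwp (proj1 (Hv s0 y H)) (proj2 (Hv s0 y H))).
      assert (E : Derive w s0 * (D1 u s0 y - D1 v s0 y) + w s0 * (D1 (D1 u) s0 y - D1 (D1 v) s0 y) +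
        (D2 (D2 u) s0 y - D2 (D2 v) s0 y) / w s0 =
        (Derive w s0 * D1 u s0 y + w s0 * D1 (D1 u) s0 y + D2 (D2 u) s0 y / w s0) -
        (Derive w s0 * D1 v s0 y + w s0 * D1 (D1 v) s0 y + D2 (D2 v) s0 y / w s0)) by (field; lra).
      rewrite E. lra.
    - intros s0 H. unfold h. pose proof (Pu s0 0 (Rlt_le _ _ H)) as E1. pose proof (Pv s0 0 (Rlt_le _ _ H)) as E2.
      rewrite Rplus_0_l in E1, E2. rewrite E1, E2. split; [reflexivity|].
      assert (Hu0 := C2_facts u s0 0 (proj1 (Hu s0 0 H))).
      assert (Hu2 := C2_facts u s0 (2*PI) (proj1 (Hu s0 (2*PI) H))).
      assert (Hv0 := C2_facts v s0 0 (proj1 (Hv s0 0 H))).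
      assert (Hv2 := C2_facts v s0 (2*PI) (proj1 (Hv s0 (2*PI) H))).
      rewrite (per_deriv u s0), (per_deriv v s0); auto.
      + intro t; apply Pv; lra.
      + eexists; apply Hv0.
      + eexists; apply Hv2.
      + intro t; apply Pu; lra.
      + eexists; apply Hu0.
      + eexists; apply Hu2. }
  assert (HM : forall s t, 0 < s -> Rabs (h s t) <= Mu + Mv).
  { intros s0 t H. unfold h. unfold Rminus. eapply Rle_trans; [apply Rabs_triang|].
    rewrite Rabs_Ropp. pose proof (HMu s0 t (Rlt_le _ _ H)). pose proof (HMv s0 t (Rlt_le _ _ H)). lra. }
  assert (Hb : forall y, 0 <= y <= 2*PI -> continuity_2d_pt (fun a b => h (Rmax 0 a) b) 0 y).
  { intros y _. unfold h.
    apply (continuity_2d_pt_minus (fun a b => u (Rmax 0 a) b) (fun a b => v (Rmax 0 a) b));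
    apply bnd_cont; [apply Cu|apply Cv]; lra. }
  assert (Hh0 : forall y, h 0 y = 0) by (intro y; unfold h; rewrite H0; ring).
  pose proof (energy_zero _ _ _ _ _ _ _ _ HEH HM Hdiv Hb Hh0) as HZ.
  assert (HZ' : h s th = 0).
  { apply (per_reduce (fun t => h s t)).
    - intro t. unfold h. rewrite Pu, Pv by lra. reflexivity.
    - intros t Ht. apply HZ; auto. }
  unfold h in HZ'. lra.
Qed.
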